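(* (Soundness) For every $\varphi\in\mathcal{L}_{AIL}$, if $\vdash\varphi$ in the system $\mathbf{AIL}$, then $\varphi$ is valid, i.e. $M,w\vDash_{AIL}\varphi$ for every epistemic model with awareness $M$ and every world $w$ of $M$.
   Context: Let $\mathcal{P}$ be a countable set of atoms and $\mathcal{G}$ a finite set of agents. An epistemic model with awareness is $M=\langle W,\{\sim_i,\mathscr{A}_i\}_{i\in\mathcal{G}},V\rangle$: $W\neq\emptyset$, $\sim_i$ an equivalence relation on $W$, $\mathscr{A}_i:W\to 2^{\mathcal{P}}$ with $\mathscr{A}_i(w)=\mathscr{A}_i(v)$ whenever $(w,v)\in\sim_i$, $V:\mathcal{P}\to 2^W$. $(w,v)\in\approx_i$ iff $\mathscr{A}_i(w)=\mathscr{A}_i(v)$ and $w,v$ agree on every $p\in\mathscr{A}_i(w)$. $\sim_i\circ\approx_i=\{(w,v):\exists t\,((w,t)\in\approx_i,(t,v)\in\sim_i)\}$; $R^+$ is the transitive closure. Language $\mathcal{L}_{AIL}$: $\varphi::=p\mid\neg\varphi\mid\varphi\wedge\varphi\mid A_i\varphi\mid I_i\varphi\mid E_i\varphi\mid[\approx]_i\varphi\mid[\circ^+]_i\varphi$. Semantics: $p$ true at $w$ iff $w\in V(p)$; Boolean as usual; $A_i\varphi$ iff $At(\varphi)\subseteq\mathscr{A}_i(w)$ ($At$ = atoms occurring); $I_i\varphi$, $[\approx]_i\varphi$, $[\circ^+]_i\varphi$ iff $\varphi$ holds at all successors of $w$ along $\sim_i$, $\approx_i$, $(\sim_i\circ\approx_i)^+$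 respectively; $E_i\varphi$ iff $A_i\varphi$ and $[\circ^+]_i\varphi$ hold. The Hilbert system $\mathbf{AIL}$ has axioms (for all formulas $\varphi,\psi$, atoms $p$, agents $i,j$): all propositional tautologies; $A_i\varphi\leftrightarrow A_i\neg\varphi$; $A_i(\varphi\wedge\psi)\leftrightarrow A_i\varphi\wedge A_i\psi$; $A_i\varphi\leftrightarrow A_iA_j\varphi$; $A_i\varphi\leftrightarrow A_iI_j\varphi$; $A_i\varphi\leftrightarrow A_i[\approx]_j\varphi$; $A_i\varphi\leftrightarrow A_i[\circ^+]_j\varphi$; $A_i\varphi\leftrightarrow A_iE_j\varphi$; $A_i\varphi\to I_iA_i\varphi$; $\neg A_i\varphi\to I_i\neg A_i\varphi$; $A_ip\wedge p\to[\approx]_ip$; for $\Box\in\{I_i,[\approx]_i\}$: $\Box(\varphi\to\psi)\to(\Box\varphi\to\Box\psi)$, $\Box\varphi\to\varphi$, $\neg\Box\varphi\to\Box\neg\Box\varphi$; $[\circ^+]_i(\varphi\to\psi)\to([\circ^+]_i\varphi\to[\circ^+]_i\psi)$; $[\circ^+]_i\varphi\to\varphi\wedge[\approx]_iI_i[\circ^+]_i\varphi$; $[\circ^+]_i(\varphi\to[\approx]_iI_i\varphi)\to(\varphi\to[\circ^+]_i\varphi)$; $E_i\varphi\leftrightarrow A_i\varphi\wedge[\circ^+]_i\varphi$. Rules: modus ponens, and necessitation for each of $I_i$, $[\approx]_i$, $[\circ^+]_i$ (from $\vdash\varphi$ infer $\vdash\Box\varphi$). $\vdash\varphi$ means $\varphi$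 is a theorem. *)

(* Defs.v *)
From Stdlib Require Import List Relations.
Import ListNotations.

(* Atoms: the countable set P is represented by nat. *)
Definition atom := nat.

Section Syntax.
Variable G : Type. (* agents *)

Inductive form : Type :=
| Atom : atom -> form
| Neg : form -> form
| And : form -> form -> form
| Aw : G -> form -> form
| Imp : G -> form -> form
| Exp : G -> form -> form
| BoxApprox : G -> form -> form
| BoxCirc : G -> form -> form.

Fixpoint atoms (f : form) : list atom :=
  match f with
  | Atom p => [p]
  | Neg a => atoms a
  | And a b => atoms a ++ atoms b
  | Aw _ a | Imp _ a | Exp _ a | BoxApprox _ a | BoxCirc _ a => atoms a
  end.

Definition Or (a b : form) := Neg (And (Neg a) (Neg b)).
Definition Impl (a b : form) := Neg (And a (Neg b)).
Definition Iff (a b : form) := And (Impl a b) (Impl b a).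
End Syntax.

Arguments Atom {G}. Arguments Neg {G}. Arguments And {G}. Arguments Aw {G}.
Arguments Imp {G}. Arguments Exp {G}. Arguments BoxApprox {G}.
Arguments BoxCirc {G}. Arguments Or {G}. Arguments Impl {G}. Arguments Iff {G}.
Arguments atoms {G}.

Record model (G : Type) : Type := {
  world : Type;
  world_inhabited : inhabited world;
  sim : G -> world -> world -> Prop;
  sim_equiv : forall i, equivalence world (sim i);
  aw : G -> world -> atom -> Prop;
  aw_sim : forall i w v, sim i w v -> forall p, aw i w p <-> aw i v p;
  val : atom -> world -> Prop
}.
Arguments world {G}. Arguments sim {G}. Arguments aw {G}. Arguments val {G}.

Section Semantics.
Variables (G : Type) (M : model G).

Definition approx (i : G) (w v : world M) : Prop :=
  (forall p, aw M i w p <-> aw M i v p) /\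
  (forall p, aw M i w p -> (val M p w <-> val M p v)).

Definition circ (i : G) (w v : world M) : Prop :=
  exists t, approx i w t /\ sim M i t v.

Definition circ_plus (i : G) : relation (world M) := clos_trans _ (circ i).

Definition aware (i : G) (w : world M) (f : form G) : Prop :=
  forall p, In p (atoms f) -> aw M i w p.

Fixpoint sat (w : world M) (f : form G) : Prop :=
  match f with
  | Atom p => val M p w
  | Neg a => ~ sat w a
  | And a b => sat w a /\ sat w b
  | Aw i a => aware i w a
  | Imp i a => forall v, sim M i w v -> sat v a
  | Exp i a => aware i w a /\ (forall v, circ_plus i w v -> sat v a)
  | BoxApprox i a => forall v, approx i w v -> sat v a
  | BoxCirc i a => forall v, circ_plus i w v -> sat v a
  end.
End Semantics.
Arguments sat {G} M w f.

(* Propositional tautologies: true under every boolean valuation of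
   the formulas treating every non-Boolean formula as a propositional letter. *)
Fixpoint peval {G : Type} (v : form G -> bool) (f : form G) : bool :=
  match f with
  | Neg a => negb (peval v a)
  | And a b => andb (peval v a) (peval v b)
  | _ => v f
  end.
Definition tautology {G : Type} (f : form G) : Prop :=
  forall v : form G -> bool, peval v f = true.

Inductive prov {G : Type} : form G -> Prop :=
| ax_taut : forall f, tautology f -> prov f
| ax_A_neg : forall i f, prov (Iff (Aw i f) (Aw i (Neg f)))
| ax_A_and : forall i f g, prov (Iff (Aw i (And f g)) (And (Aw i f) (Aw i g)))
| ax_A_A : forall i j f, prov (Iff (Aw i f) (Aw i (Aw j f)))
| ax_A_I : forall i j f, prov (Iff (Aw i f) (Aw i (Imp j f)))
| ax_A_approx : forall i j f, prov (Iff (Aw i f) (Aw i (BoxApprox j f)))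
| ax_A_circ : forall i j f, prov (Iff (Aw i f) (Aw i (BoxCirc j f)))
| ax_A_E : forall i j f, prov (Iff (Aw i f) (Aw i (Exp j f)))
| ax_A_intro : forall i f, prov (Impl (Aw i f) (Imp i (Aw i f)))
| ax_nA_intro : forall i f, prov (Impl (Neg (Aw i f)) (Imp i (Neg (Aw i f))))
| ax_A_atom : forall i p,
    prov (Impl (And (Aw i (Atom p)) (Atom p)) (BoxApprox i (Atom p)))
| ax_K_I : forall i f g, prov (Impl (Imp i (Impl f g)) (Impl (Imp i f) (Imp i g)))
| ax_T_I : forall i f, prov (Impl (Imp i f) f)
| ax_5_I : forall i f, prov (Impl (Neg (Imp i f)) (Imp i (Neg (Imp i f))))
| ax_K_approx : forall i f g,
    prov (Impl (BoxApprox i (Impl f g)) (Impl (BoxApprox i f) (BoxApprox i g)))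
| ax_T_approx : forall i f, prov (Impl (BoxApprox i f) f)
| ax_5_approx : forall i f,
    prov (Impl (Neg (BoxApprox i f)) (BoxApprox i (Neg (BoxApprox i f))))
| ax_K_circ : forall i f g,
    prov (Impl (BoxCirc i (Impl f g)) (Impl (BoxCirc i f) (BoxCirc i g)))
| ax_mix : forall i f,
    prov (Impl (BoxCirc i f) (And f (BoxApprox i (Imp i (BoxCirc i f)))))
| ax_ind : forall i f,
    prov (Impl (BoxCirc i (Impl f (BoxApprox i (Imp i f)))) (Impl f (BoxCirc i f)))
| ax_E : forall i f, prov (Iff (Exp i f) (And (Aw i f) (BoxCirc i f)))
| r_mp : forall f g, prov (Impl f g) -> prov f -> prov g
| r_nec_I : forall i f, prov f -> prov (Imp i f)
| r_nec_approx : forall i f, prov f -> prov (BoxApprox i f)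
| r_nec_circ : forall i f, prov f -> prov (BoxCirc i f).

Definition finite_type (G : Type) : Prop := exists l : list G, forall i : G, In i l.

(* Main.v *)
Require Import Defs.
From Stdlib Require Import List Relations Classical ClassicalEpsilon.
Import ListNotations.

Section S.
Variables (G : Type) (M : model G).

Lemma imp_I (w : world M) (a b : form G) :
  (sat M w a -> sat M w b) -> sat M w (Impl a b).
Proof. intros H [Ha Hb]. apply Hb, H, Ha. Qed.

Lemma imp_E (w : world M) (a b : form G) :
  sat M w (Impl a b) -> sat M w a -> sat M w b.
Proof. intros H Ha. apply NNPP. intro Hn. apply H. split; assumption. Qed.

Lemma iff_I (w : world M) (a b : form G) :
  (sat M w a -> sat M w b) -> (sat M w b -> sat M w a) -> sat M w (Iff a b).
Proof. intros H1 H2. split; apply imp_I; assumption. Qed.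

Lemma sim_refl i w : sim M i w w.
Proof. destruct (sim_equiv G M i) as [r t s]. apply r. Qed.
Lemma sim_sym i w v : sim M i w v -> sim M i v w.
Proof. destruct (sim_equiv G M i) as [r t s]. apply s. Qed.
Lemma sim_trans i w v u : sim M i w v -> sim M i v u -> sim M i w u.
Proof. destruct (sim_equiv G M i) as [r t s]. apply t. Qed.

Lemma approx_refl i w : approx G M i w w.
Proof. split; intros; tauto. Qed.
Lemma approx_sym i w v : approx G M i w v -> approx G M i v w.
Proof.
  intros [H1 H2]. split; intros p.
  - specialize (H1 p); tauto.
  - intros Hp. apply H1 in Hp. specialize (H2 p Hp). tauto.
Qed.
Lemma approx_trans i w v u : approx G M i w v -> approx G M i v u -> approx G M i w u.
Proof.
  intros [H1 H2] [H3 H4]. split; intros p.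
  - rewrite H1; apply H3.
  - intros Hp. rewrite (H2 p Hp). apply H4. apply H1, Hp.
Qed.

Lemma circ_refl i w : circ G M i w w.
Proof. exists w. split; [apply approx_refl | apply sim_refl]. Qed.

Lemma taut_sound (w : world M) (f : form G) : tautology f -> sat M w f.
Proof.
  intros Ht.
  set (v := fun g : form G => if excluded_middle_informative (sat M w g) then true else false).
  assert (Hv : forall g, peval v g = true <-> sat M w g).
  { induction g; simpl;
      try (unfold v; destruct (excluded_middle_informative _); split; intros; auto; discriminate).
    - rewrite Bool.negb_true_iff, <- Bool.not_true_iff_false. tauto.
    - rewrite Bool.andb_true_iff. tauto. }
  apply Hv, Ht.
Qed.
End S.

Theorem theorem3 (G : Type) (HG : finite_type G) (f : form G) :
  prov f -> forall (M : model G) (w : world M), sat M w f.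
Proof.
  induction 1; intros M w.
  - apply taut_sound; assumption.
  - apply iff_I; simpl; auto.
  - apply iff_I; simpl; unfold aware; simpl.
    + intros H0; split; intros p Hp; apply H0; apply in_app_iff; auto.
    + intros [H1 H2] p Hp; apply in_app_iff in Hp; destruct Hp; auto.
  - apply iff_I; simpl; auto.
  - apply iff_I; simpl; auto.
  - apply iff_I; simpl; auto.
  - apply iff_I; simpl; auto.
  - apply iff_I; simpl; auto.
  - apply imp_I; simpl; intros H v Hv p Hp. apply (aw_sim G M i w v Hv). apply H, Hp.
  - apply imp_I; simpl; intros H v Hv Hc. apply H. intros p Hp.
    apply (aw_sim G M i w v Hv). apply Hc, Hp.
  - apply imp_I; simpl; intros [Ha Hp] v [H1 H2]. apply (H2 p); auto.
    apply Ha. simpl; auto.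
  - apply imp_I; intros H. apply imp_I; intros H1. intros v Hv.
    eapply imp_E; [apply H | apply H1]; auto.
  - apply imp_I; simpl; intros H. apply H, sim_refl.
  - apply imp_I; simpl; intros H v Hv Hc. apply H. intros u Hu.
    apply Hc. apply sim_trans with w; auto. apply sim_sym; auto.
  - apply imp_I; intros H. apply imp_I; intros H1. intros v Hv.
    eapply imp_E; [apply H | apply H1]; auto.
  - apply imp_I; simpl; intros H. apply H, approx_refl.
  - apply imp_I; simpl; intros H v Hv Hc. apply H. intros u Hu.
    apply Hc. apply approx_trans with w; auto. apply approx_sym; auto.
  - apply imp_I; intros H. apply imp_I; intros H1. intros v Hv.
    eapply imp_E; [apply H | apply H1]; auto.
  - apply imp_I; simpl; intros H. split.
    + apply H. apply t_step, circ_refl.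
    + intros t Ht u Hu v Hv. apply H. apply t_trans with u; auto.
      apply t_step. exists t; auto.
  - apply imp_I; intros H. apply imp_I; intros H1. intros v Hv.
    apply clos_trans_tn1 in Hv. induction Hv.
    + assert (Hw := imp_E G M w f (BoxApprox i (Imp i f)) (H w (t_step _ _ _ _ (circ_refl _ M i w))) H1).
      destruct H0 as [t [Ht1 Ht2]]. simpl in Hw. apply (Hw t Ht1 y Ht2).
    + assert (Hy := imp_E G M y f (BoxApprox i (Imp i f)) (H y (clos_tn1_trans _ _ _ _ Hv)) IHHv).
      destruct H0 as [t [Ht1 Ht2]]. simpl in Hy. apply (Hy t Ht1 z Ht2).
  - apply iff_I; simpl; tauto.
  - apply (imp_E _ M w f g); auto.
  - simpl; auto.
  - simpl; auto.
  - simpl; auto.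
Qed.
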